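(* Let $n\ge5$ and $S\subseteq V(C_n)$. Suppose (1) every gap of $S$ contains at most $3$ vertices, and at most one gap of $S$ contains $3$ vertices; and (2) if a gap of $S$ contains at least $2$ vertices, then its neighboring gaps contain at most $1$ vertex. Then $S$ is a distance-$1$ resolving set of $C_n$.
   Context: $C_n$ is the cycle on $n$ vertices. $d$ is the shortest-path distance and $d_1(x,y)=\min\{d(x,y),2\}$; $S$ is a distance-$1$ resolving set if for all distinct $x,y$ some $z\in S$ has $d_1(x,z)\ne d_1(y,z)$. For a set $M$ of at least two vertices of $C_n$ and distinct $u_i,u_j\in M$, let $P,P'$ be the two $u_i$–$u_j$ paths in $C_n$. If one of them, say $P$, contains no vertices of $M$ other than $u_i,u_j$, then $u_i,u_j$ are neighboring vertices of $M$ and $V(P)-\{u_i,u_j\}$ is a gap of $M$ (possibly empty). The two gaps determined by a vertex of $M$ and its two neighboring vertices of $M$ are called neighboring gaps. A set $M$ with $|M|=r$ has $r$ gaps. *)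

(* Defs.v *)
(* The cycle C_n has vertex set 'I_n, with i adjacent to
   i+1 mod n. *)
From mathcomp Require Import all_boot.
Set Implicit Arguments. Unset Strict Implicit. Unset Printing Implicit Defensive.

Definition fdist (n : nat) (x y : 'I_n) : nat := (y + n - x) %% n.

Definition cdist (n : nat) (x y : 'I_n) : nat := minn (fdist x y) (fdist y x).

Definition d1 (n : nat) (x y : 'I_n) : nat := minn (cdist x y) 2.

Definition dist1_resolving (n : nat) (S : {set 'I_n}) : Prop :=
  forall x y : 'I_n, x != y -> exists2 z, z \in S & d1 x z != d1 y z.

(* the gap of S following u in S (clockwise): the vertices strictly between
   u and the next vertex of S, i.e. V(P) - {u, v} for the S-free path P from
   u to its clockwise neighbouring vertex v of S. *)
Definition gap (n : nat) (S : {set 'I_n}) (u : 'I_n) : {set 'I_n} :=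
  [set x : 'I_n | (0 < fdist u x) &&
     [forall v in S, ~~ ((0 < fdist u v) && (fdist u v <= fdist u x))]].

Definition next_in (n : nat) (S : {set 'I_n}) (u v : 'I_n) : Prop :=
  [/\ v \in S, v != u & forall w, w \in S -> 0 < fdist u w -> fdist u v <= fdist u w].

(* the set of gaps of S (|S| gaps when |S| >= 2) *)
Definition gaps (n : nat) (S : {set 'I_n}) : {set {set 'I_n}} :=
  [set gap S u | u in S].

(* G and H are neighbouring gaps: they are the two gaps determined by a vertex
   v of S and its two neighbouring vertices u (before v) and w (after v):
   G = gap before v = gap S u, H = gap after v = gap S v. *)
Definition neighboring_gaps (n : nat) (S : {set 'I_n}) (G H : {set 'I_n}) : Prop :=
  exists u v, [/\ u \in S, next_in S u v, G = gap S u & H = gap S v].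

(* Main.v *)
Require Import Defs.
From mathcomp Require Import all_boot.
From mathcomp Require Import zify.
Set Implicit Arguments. Unset Strict Implicit. Unset Printing Implicit Defensive.

Definition sh n (u : 'I_n.+1) (j : nat) : 'I_n.+1 := inord ((u + j) %% n.+1).

Lemma shv n (u : 'I_n.+1) j : nat_of_ord (sh u j) = (u + j) %% n.+1.
Proof. by rewrite /sh inordK // ltn_pmod. Qed.

Lemma fdist_sh n (u : 'I_n.+1) j : fdist u (sh u j) = j %% n.+1.
Proof.
rewrite /fdist shv -addnBA; last exact: ltnW (ltn_ord u).
rewrite modnDml.
have -> : u + j + (n.+1 - u) = j + n.+1 by have := ltn_ord u; lia.
by rewrite modnDr.
Qed.

Lemma sh_fdist n (u v : 'I_n.+1) : sh u (fdist u v) = v.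
Proof.
apply: ord_inj; rewrite shv /fdist modnDmr.
have -> : u + (v + n.+1 - u) = v + n.+1 by have := ltn_ord u; lia.
by rewrite modnDr modn_small.
Qed.

Lemma sh_add n (u : 'I_n.+1) a b : sh (sh u a) b = sh u (a + b).
Proof. by apply: ord_inj; rewrite !shv modnDml addnA. Qed.

Lemma sh0 n (u : 'I_n.+1) : sh u 0 = u.
Proof. by apply: ord_inj; rewrite shv addn0 modn_small. Qed.

Lemma shE n (x : 'I_n.+1) a b c : a + b = n.+1 + c -> sh (sh x a) b = sh x c.
Proof.
move=> e; rewrite sh_add e; apply: ord_inj; rewrite !shv.
by rewrite addnCA modnDl.
Qed.

Lemma sh_inj n (u : 'I_n.+1) i j : i < n.+1 -> j < n.+1 -> sh u i = sh u j -> i = j.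
Proof.
move=> hi hj /(congr1 (fdist u)); by rewrite !fdist_sh !modn_small.
Qed.

Lemma sh_cancel n (a b : 'I_n.+1) k : sh a k = sh b k -> a = b.
Proof.
move/(congr1 (@nat_of_ord _)); rewrite !shv => /eqP; rewrite eqn_modDr !modn_small //.
by move/eqP/ord_inj.
Qed.

Lemma fdist_self n (u : 'I_n.+1) : fdist u u = 0.
Proof. by rewrite /fdist addKn modnn. Qed.

Lemma fdist_eq0 n (a b : 'I_n.+1) : fdist a b = 0 -> a = b.
Proof. by move=> e; rewrite -(sh_fdist a b) e sh0. Qed.

Lemma fdist_lt n (a b : 'I_n.+1) : fdist a b < n.+1.
Proof. exact: ltn_pmod. Qed.

Lemma d1_self n (x : 'I_n.+1) : d1 x x = 0.
Proof. by rewrite /d1 /cdist fdist_self. Qed.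

Lemma d1_eq0 n (a b : 'I_n.+1) : d1 a b = 0 -> a = b.
Proof.
rewrite /d1 /cdist => e.
have [h|h] : fdist a b = 0 \/ fdist b a = 0 by lia.
  exact: fdist_eq0.
by apply/esym/fdist_eq0.
Qed.

Lemma d1_1 n (a b : 'I_n.+1) : d1 a b = 1 -> b = sh a 1 \/ a = sh b 1.
Proof.
rewrite /d1 /cdist => e.
have [h|h] : fdist a b = 1 \/ fdist b a = 1 by lia.
  by left; rewrite -h sh_fdist.
by right; rewrite -h sh_fdist.
Qed.

Lemma d1_sym n (a b : 'I_n.+1) : d1 a b = d1 b a.
Proof. by rewrite /d1 /cdist [minn (fdist a b) _]minnC. Qed.

Lemma shP n (x : 'I_n.+1) k : sh (sh x n) k.+1 = sh x k.
Proof. apply: shE. by rewrite addnS addSn. Qed.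

Lemma d1_adj1 n (a : 'I_n.+1) : 2 < n.+1 -> d1 a (sh a 1) = 1.
Proof.
move=> n2; rewrite /d1 /cdist fdist_sh modn_small; last lia.
have e : sh (sh a 1) n = a by rewrite (@shE _ _ _ _ 0) ?sh0 // add1n addn0.
have -> : fdist (sh a 1) a = n by rewrite -{2}e fdist_sh modn_small.
lia.
Qed.

Lemma d1_pred n (a : 'I_n.+1) : 2 < n.+1 -> d1 a (sh a n) = 1.
Proof.
move=> n2; have e : sh (sh a n) 1 = a by rewrite shP sh0.
by rewrite d1_sym -{2}e d1_adj1.
Qed.

Lemma minpred n (S : {set 'I_n.+1}) (w u0 : 'I_n.+1) : u0 \in S -> w \notin S ->
  exists u, [/\ u \in S, 0 < fdist u w, sh u (fdist u w) = w &
    forall j, 0 < j < fdist u w -> sh u j \notin S].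
Proof.
move=> u0S wS.
case: (arg_minnP (fun u => fdist u w) u0S) => u uS umin.
have {}uS : u \in S by exact: uS.
have {}umin : forall v, v \in S -> fdist u w <= fdist v w by move=> v vS; exact: umin.
exists u; split.
- exact uS.
- rewrite lt0n; apply/negP => /eqP /fdist_eq0 e.
  subst w. by rewrite uS in wS.
- exact: sh_fdist.
- have dlt := fdist_lt u w.
  set d := fdist u w in umin dlt *.
  move=> j /andP [j0 jd]; apply/negP => ujS.
  have := umin _ ujS.
  have e : sh (sh u j) (d - j) = w.
    rewrite sh_add subnKC; first by rewrite sh_fdist.
    by apply: ltnW.
  have f : fdist (sh u j) (sh (sh u j) (d-j)) = d - j.
    rewrite fdist_sh modn_small //.
    exact: leq_ltn_trans (leq_subr _ _) dlt.
  rewrite e in f; rewrite f.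
  lia.
Qed.

Lemma run_gap n (S : {set 'I_n.+1}) (u : 'I_n.+1) m : m < n.+1 ->
  (forall j, 0 < j <= m -> sh u j \notin S) ->
  forall j, 0 < j <= m -> sh u j \in gap S u.
Proof.
move=> mN H j /andP [j0 jm].
rewrite inE fdist_sh modn_small; last lia.
rewrite j0 /=.
apply/forallP => v; apply/implyP => vS; apply/negP => /andP [v0 vj].
have : sh u (fdist u v) \notin S by apply: H; rewrite v0 /=; exact: leq_trans vj jm.
by rewrite sh_fdist vS.
Qed.

Lemma card_run n (u : 'I_n.+1) (G : {set 'I_n.+1}) a m : a + m <= n.+1 ->
  (forall j, j < m -> sh u (a + j) \in G) -> m <= #|G|.
Proof.
move=> le H.
have inj : injective (fun j : 'I_m => sh u (a + j)).
  move=> i j e; apply: ord_inj.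
  have := @sh_inj n u (a + i) (a + j).
  have := ltn_ord i; have := ltn_ord j.
  move=> hj hi /(_ _ _ e) => h; lia.
have sub : [set sh u (a + j) | j : 'I_m] \subset G.
  by apply/subsetP => x /imsetP [j _ ->]; exact: H.
have := subset_leq_card sub.
by rewrite card_imset // card_ord.
Qed.

Lemma next_run n (S : {set 'I_n.+1}) (u : 'I_n.+1) e : 0 < e < n.+1 ->
  sh u e \in S -> (forall j, 0 < j < e -> sh u j \notin S) -> next_in S u (sh u e).
Proof.
move=> /andP[e0 eN] eS H; split => //.
- apply/negP => /eqP e'.
  have := congr1 (fdist u) e'.
  rewrite fdist_sh modn_small // fdist_self; lia.
- move=> w wS w0; rewrite fdist_sh modn_small // leqNgt; apply/negP => lt.
  have : sh u (fdist u w) \notin S by apply: H; rewrite w0 lt.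
  by rewrite sh_fdist wS.
Qed.

Lemma no4 n (S : {set 'I_n.+1}) (w u0 : 'I_n.+1) : 4 < n.+1 -> u0 \in S ->
  (forall G, G \in gaps S -> #|G| <= 3) ->
  w \notin S -> sh w 1 \notin S -> sh w 2 \notin S -> sh w 3 \notin S -> False.
Proof.
move=> n4 u0S hG w0 w1 w2 w3.
have [u [uS d0 ud umin]] := minpred u0S w0.
have dlt := fdist_lt u w.
set d := fdist u w in d0 ud umin dlt.
have nS : forall j, 0 < j <= 4 -> sh u j \notin S.
  move=> j /andP [j0 j4]; case: (ltnP j d) => jd.
    by apply: umin; rewrite j0.
  have -> : sh u j = sh w (j - d) by rewrite -ud sh_add subnKC.
  have : j - d <= 3 by lia.
  by case: (j - d) => [|[|[|[|k]]]] //; rewrite sh0.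
have g := run_gap n4 nS.
have c : 4 <= #|gap S u| by apply: (@card_run _ u _ 1) => // j j4; apply: g; lia.
have := hG (gap S u) (imset_f _ uS).
lia.
Qed.

Lemma gap3 n (S : {set 'I_n.+1}) (a : 'I_n.+1) : 3 < n.+1 ->
  (forall G, G \in gaps S -> #|G| <= 3) -> a \in S ->
  sh a 1 \notin S -> sh a 2 \notin S -> sh a 3 \notin S -> #|gap S a| = 3.
Proof.
move=> n3 hG aS a1 a2 a3.
have nS : forall j, 0 < j <= 3 -> sh a j \notin S.
  by move=> j /andP [j0 j3]; case: j j0 j3 => [|[|[|[|k]]]].
have g := run_gap n3 nS.
have c : 3 <= #|gap S a| by apply: (@card_run _ a _ 1) => // j j4; apply: g; lia.
have := hG (gap S a) (imset_f _ aS).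
lia.
Qed.

Lemma gap_neq n (S : {set 'I_n.+1}) (a b : 'I_n.+1) : 1 < n.+1 ->
  a \in S -> b \in S -> sh a 1 \notin S -> a != b -> gap S a != gap S b.
Proof.
move=> n1 aS bS a1 ab; apply/negP => /eqP e.
have : sh a 1 \in gap S a.
  apply: (@run_gap _ _ _ 1) => //; move=> j /andP [j0 j1].
  by have -> : j = 1 by lia.
rewrite e inE => /andP [_ /forallP /(_ a)].
rewrite aS /=.
have klt := fdist_lt b a.
have ka : sh b (fdist b a) = a := sh_fdist b a.
set k := fdist b a in klt ka *.
have k0 : 0 < k.
  rewrite lt0n; apply/negP => /eqP k0.
  by move: ab; rewrite -ka k0 sh0 eqxx.
have e1 : sh a 1 = sh b (k + 1) by rewrite -ka sh_add.
case: (ltnP (k + 1) n.+1) => kN.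
  by rewrite e1 fdist_sh modn_small // k0 addn1 leqnSn.
have e2 : sh a 1 = b.
  rewrite e1 (_ : k + 1 = n.+1 + 0); last lia.
  by apply: ord_inj; rewrite shv addn0 modnDr modn_small.
by move: a1; rewrite e2 bS.
Qed.

Lemma two3 n (S : {set 'I_n.+1}) (a b : 'I_n.+1) : 4 < n.+1 ->
  (forall G, G \in gaps S -> #|G| <= 3) ->
  #|[set G in gaps S | #|G| == 3]| <= 1 ->
  a \in S -> sh a 1 \notin S -> sh a 2 \notin S -> sh a 3 \notin S ->
  b \in S -> sh b 1 \notin S -> sh b 2 \notin S -> sh b 3 \notin S ->
  a != b -> False.
Proof.
move=> n4 hG h3 aS a1 a2 a3 bS b1 b2 b3 ab.
have ga := gap3 (ltnW n4) hG aS a1 a2 a3.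
have gb := gap3 (ltnW n4) hG bS b1 b2 b3.
have sub : [set gap S a; gap S b] \subset [set G in gaps S | #|G| == 3].
  apply/subsetP => G; rewrite !inE => /orP [] /eqP ->;
    rewrite ?ga ?gb eqxx andbT; exact: imset_f.
have := subset_leq_card sub.
have n1 : 1 < n.+1 by lia.
rewrite cards2 (gap_neq n1 aS bS a1 ab) => c.
by have := leq_trans c h3.
Qed.

Lemma noC n (S : {set 'I_n.+1}) (w : 'I_n.+1) : 4 < n.+1 -> 2 <= #|S| ->
  (forall G H, neighboring_gaps S G H ->
     (2 <= #|G| -> #|H| <= 1) /\ (2 <= #|H| -> #|G| <= 1)) ->
  w \notin S -> sh w 1 \notin S -> sh w 2 \in S -> sh w 3 \notin S -> sh w 4 \notin S -> False.
Proof.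
move=> n4 S2 hN w0 w1 w2 w3 w4.
have /card_gt0P [u0 u0S] : 0 < #|S| by lia.
have [u [uS d0 ud umin]] := minpred u0S w0.
have dlt := fdist_lt u w.
set d := fdist u w in d0 ud umin dlt.
have shw : forall k, sh w k = sh u (d + k) by move=> k; rewrite -ud sh_add.
have d1N : d.+1 < n.+1.
  rewrite ltn_neqAle dlt andbT; apply/negP => /eqP e.
  move: w1; rewrite shw addn1 e.
  have -> : sh u n.+1 = u by apply: ord_inj; rewrite shv modnDr modn_small.
  by rewrite uS.
have nS : forall j, 0 < j < d + 2 -> sh u j \notin S.
  move=> j /andP [j0 jd]; case: (ltnP j d) => jd'.
    by apply: umin; rewrite j0.
  have : (j == d) || (j == d + 1) by lia.
  case/orP => /eqP ->; first by rewrite -(addn0 d) -shw sh0.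
  by rewrite -shw.
have d2N : d + 2 < n.+1.
  rewrite ltn_neqAle; apply/andP; split; last by lia.
  apply/negP => /eqP e.
  have : #|S| <= 1.
    have sub : S \subset [set u].
      apply/subsetP => s sS; rewrite inE; apply/negPn/negP => su.
      have ks := sh_fdist u s.
      have : sh u (fdist u s) \notin S.
        have fl := fdist_lt u s.
        apply: nS; apply/andP; split; last lia.
        rewrite lt0n; apply/negP => /eqP k0.
        by move: su; rewrite -(fdist_eq0 k0) eqxx.
      by rewrite ks sS.
    by have := subset_leq_card sub; rewrite cards1.
  lia.
have nx : next_in S u (sh w 2).
  rewrite shw; apply: next_run.
  - by apply/andP; split; lia.
  - by rewrite -shw.
  - exact: nS.
have g1 : 2 <= #|gap S u|.
  apply: (@card_run _ u _ d) => [|j j2]; first lia.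
  apply: (run_gap d1N); last lia.
  by move=> i /andP [i0 i1]; apply: nS; lia.
have g2 : 2 <= #|gap S (sh w 2)|.
  apply: (@card_run _ (sh w 2) _ 1) => [|j j2]; first lia.
  have n2 : 2 < n.+1 by lia.
  apply: (run_gap n2); last lia.
  move=> i /andP [i0 i2]; rewrite sh_add.
  have : (i == 1) || (i == 2) by lia.
  by case/orP => /eqP ->.
have [h _] : (2 <= #|gap S u| -> #|gap S (sh w 2)| <= 1) /\
             (2 <= #|gap S (sh w 2)| -> #|gap S u| <= 1).
  by apply: hN; exists u, (sh w 2).
have := h g1; lia.
Qed.

Lemma shQ n (v : 'I_n.+1) : 0 < n ->
  [/\ sh (sh v n.-1) 1 = sh v n, sh (sh v n.-1) 2 = v & sh (sh v n.-1) 3 = sh v 1].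
Proof.
move=> n0; split.
- by rewrite sh_add addn1 prednK.
- by rewrite (@shE _ _ _ _ 0) ?sh0 //; lia.
- by apply: shE; lia.
Qed.

Lemma case1 n (S : {set 'I_n.+1}) (x y : 'I_n.+1) : 4 < n.+1 -> 2 <= #|S| ->
  (forall G H, neighboring_gaps S G H ->
     (2 <= #|G| -> #|H| <= 1) /\ (2 <= #|H| -> #|G| <= 1)) ->
  x \notin S -> y \notin S -> x != y ->
  (forall z, z \in S -> d1 x z = d1 y z) -> sh x 1 \in S -> False.
Proof.
move=> n4 S2 hN xS yS xy H x1.
have n2 : 2 < n.+1 by lia.
have ey : y = sh x 2.
  have := H _ x1; rewrite d1_adj1 // => /esym /d1_1 [e|e].
    by rewrite (sh_cancel e) eqxx in xy.
  by rewrite e sh_add.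
have xm : sh x n \notin S.
  apply/negP => m; have := H _ m; rewrite d1_pred // => /esym /d1_1 [e|e].
  - rewrite ey sh_add in e.
    have n3 : 2 + 1 < n.+1 by lia.
    have := sh_inj (ltnSn n) n3 e; lia.
  - by rewrite e shP sh0 eqxx in xy.
have x3 : sh x 3 \notin S.
  apply/negP => m; have := H _ m.
  have e3 : sh x 3 = sh y 1 by rewrite ey sh_add.
  rewrite {2}e3 d1_adj1 // => /d1_1 [e|e].
  - have n3 : 3 < n.+1 by lia.
    have n1 : 1 < n.+1 by lia.
    by have := sh_inj n3 n1 e.
  - rewrite sh_add in e.
    have := congr1 (fdist x) e; rewrite fdist_self fdist_sh modn_small //.
apply: (@noC n S (sh x n)) => //; rewrite ?shP ?sh0 // -ey //.
Qed.

Theorem lemma3p3 (n : nat) (S : {set 'I_n}) :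
  5 <= n ->
  2 <= #|S| ->
  (forall G, G \in gaps S -> #|G| <= 3) ->
  #|[set G in gaps S | #|G| == 3]| <= 1 ->
  (forall G H, neighboring_gaps S G H ->
     (2 <= #|G| -> #|H| <= 1) /\ (2 <= #|H| -> #|G| <= 1)) ->
  dist1_resolving S.
Proof.
case: n S => [//|n] S n4 S2 hG h3 hN x y xy.
case: (pickP (fun z => (z \in S) && (d1 x z != d1 y z))) => [z /andP [zS ne] | H0].
  by exists z.
exfalso.
have H : forall z, z \in S -> d1 x z = d1 y z.
  by move=> z zS; have := H0 z; rewrite zS /= => /negbFE /eqP.
have H' : forall z, z \in S -> d1 y z = d1 x z by move=> z /H.
have yx : y != x by rewrite eq_sym.
have n2 : 2 < n.+1 by lia.
have /card_gt0P [u0 u0S] : 0 < #|S| by lia.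
have xS : x \notin S.
  apply/negP => xS; have := H _ xS; rewrite d1_self => /esym /d1_eq0 e.
  by rewrite e eqxx in xy.
have yS : y \notin S.
  apply/negP => yS; have := H' _ yS; rewrite d1_self => /esym /d1_eq0 e.
  by rewrite e eqxx in xy.
have x1 : sh x 1 \notin S.
  by apply/negP => m; exact: (case1 n4 S2 hN xS yS xy H m).
have y1 : sh y 1 \notin S.
  by apply/negP => m; exact: (case1 n4 S2 hN yS xS yx H' m).
have xm : sh x n \notin S.
  apply/negP => m; have := H _ m; rewrite d1_pred // => /esym /d1_1 [e|e].
  - by move: y1; rewrite -e m.
  - by rewrite e shP sh0 eqxx in xy.
have ym : sh y n \notin S.
  apply/negP => m; have := H' _ m; rewrite d1_pred // => /esym /d1_1 [e|e].
  - by move: x1; rewrite -e m.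
  - by rewrite e shP sh0 eqxx in yx.
have n0 : 0 < n by lia.
have a_in : forall v, sh v n \notin S -> v \notin S -> sh v 1 \notin S -> sh v n.-1 \in S.
  move=> v vm v0 v1; apply/negPn/negP => va.
  have [q1 q2 q3] := shQ v n0.
  apply: (@no4 n S (sh v n.-1) u0 n4 u0S hG va); by rewrite ?q1 ?q2 ?q3.
have [p1 p2 p3] := shQ x n0.
have [r1 r2 r3] := shQ y n0.
apply: (@two3 n S (sh x n.-1) (sh y n.-1) n4 hG h3 (a_in _ xm xS x1));
  rewrite ?p1 ?p2 ?p3 ?r1 ?r2 ?r3 //; first exact: a_in.
apply/negP => /eqP e.
by move: xy; rewrite -p2 -r2 e eqxx.
Qed.
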